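(* Let $\Pi=\{\Pi_\theta\}$ be a partition of a set of paths into pairwise disjoint cells and let $\Theta=\{\theta_0,\dots,\theta_{M-1}\}$ be a set of filling classes $\theta_l=(Z_{\theta_l},\Pi_{\theta_l})$ for cells of $\Pi$, totally ordered by some order. Let $Z_\Theta=\bigcup_l Z_{\theta_l}$, where each PGT $\gamma$ has duration $E_\gamma>0$, minimum separation $t^{\mathrm{minsep}}_\gamma\ge0$ and positive integer minimal allocation $\mathcal{M}_\gamma$. Then for every $t_0$ there exists a valid schedule containing exactly $\mathcal{M}_\gamma$ PGAs of every $\gamma\in Z_\Theta$, all of whose PGAs lie within $[t_0,\,t_0+\tilde{\mathcal{R}}(Z_\Theta)]$, where $$\tilde{\mathcal{R}}(Z_\Theta)=\sum_{\theta_l\in\Theta}R(Z_{\theta_l}).$$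
   Context: A filling class is $\phi=(Z_\phi,\Pi_\phi)$ where $\Pi_\phi$ is a cell of the path partition and $Z_\phi$ is a set of PGTs $\gamma$ with paths $\pi_\gamma\in\Pi_\phi$. For a set of PGTs $Z_\phi=\{\gamma_0,\dots,\gamma_{M-1}\}$ indexed so that $\mathcal{M}_{\gamma_0}\le\dots\le\mathcal{M}_{\gamma_{M-1}}$, with $E_x=E_{\gamma_x}$, $\tau_x=t^{\mathrm{minsep}}_{\gamma_x}$: $n_0=\mathcal{M}_{\gamma_0}-1$, $n_x=\mathcal{M}_{\gamma_x}-\mathcal{M}_{\gamma_{x-1}}$ ($x\ge1$), $c_x=\max(\max_{y\ge x}(E_y+\tau_y),\sum_{y=x}^{M-1}E_y)$, and $R(Z_\phi)=\sum_{x=0}^{M-1}(n_xc_x+E_x)$ ($R(\emptyset)=0$). A PGA of $\gamma$ is a time interval $[s,s+E_\gamma)$ assigned to $\gamma$; a schedule is a finite set of PGAs. A resource conflict occurs if there are PGAs $[s,e)$ of $\gamma$ and $[s',e')$ of $\gamma'$ (distinct PGAs) with $\xi(\pi_\gamma)\cap\xi(\pi_{\gamma'})\ne\emptyset$ and $s\le s'<e$, where $\xi(\pi)$ is the set of vertices on path $\pi$. A minsep violation occurs if two time-consecutive PGAs $[s,e)$, $[s'',e'')$ of the same PGT $\gamma$ satisfy $s''-e<t^{\mathrm{minsep}}_\gamma$. A schedule is valid if no resource conflict and no minsep violation occurs. *)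

(* Defs.v *)
From HB Require Import structures.
From mathcomp Require Import all_boot all_order all_algebra.
From mathcomp Require Import finmap.
From mathcomp Require Import reals.
Set Implicit Arguments. Unset Strict Implicit. Unset Printing Implicit Defensive.
Import Order.TTheory GRing.Theory Num.Theory.
Local Open Scope ring_scope.

Section PGT.
Variables (R : realType) (G : choiceType).
Variables (E tau : G -> R) (Mall : G -> nat).

(* c for the suffix [g_x; ...; g_{M-1}] *)
Definition cval (s : seq G) : R :=
  Num.max (\big[Num.max/0]_(g <- s) (E g + tau g)) (\sum_(g <- s) E g).

(* sum over x of n_x c_x + E_x, where prev is M_{gamma_{x-1}} (1 initially,
   so that n_0 = M_{gamma_0} - 1) *)
Fixpoint Raux (prev : nat) (s : seq G) : R :=
  match s with
  | [::] => 0
  | g :: s' => ((Mall g - prev)%N%:R * cval s + E g) + Raux (Mall g) s'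
  end.

Definition Rfun (Z : {fset G}) : R :=
  Raux 1 (sort (fun a b => (Mall a <= Mall b)%N) (enum_fset Z)).

(* A PGA is a pair (gamma, s) denoting the interval [s, s + E gamma);
   a schedule is a finite set of PGAs, represented by a duplicate-free list. *)
Definition PGA := (G * R)%type.

Variables (P V : Type) (path : G -> P) (xi : P -> V -> Prop).

Definition resource_conflict (S : seq PGA) : Prop :=
  exists a b, [/\ a \in S, b \in S, a <> b,
    (exists v, xi (path a.1) v /\ xi (path b.1) v) &
    a.2 <= b.2 < a.2 + E a.1].

Definition time_consecutive (S : seq PGA) (a b : PGA) : Prop :=
  [/\ a \in S, b \in S, a.1 = b.1, a.2 < b.2 &
    ~ exists c, [/\ c \in S, c.1 = a.1 & a.2 < c.2 < b.2]].

Definition minsep_violation (S : seq PGA) : Prop :=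
  exists a b, time_consecutive S a b /\ b.2 - (a.2 + E a.1) < tau a.1.

Definition valid_schedule (S : seq PGA) : Prop :=
  uniq S /\ ~ resource_conflict S /\ ~ minsep_violation S.

End PGT.

(* Main.v *)
Require Import Defs.
From HB Require Import structures.
From mathcomp Require Import all_boot all_order all_algebra.
From mathcomp Require Import finmap.
From mathcomp Require Import reals.
From mathcomp Require Import lra zify.
Import Order.TTheory GRing.Theory Num.Theory.
Local Open Scope ring_scope.

Section Build.
Variables (R : realType) (G : choiceType) (E tau : G -> R).

Definition round := (seq G * R * (G -> R))%type.

Fixpoint build (t : R) (rs : seq round) : seq (G * R) :=
  if rs is r :: rs' then [seq (g, t + r.2 g) | g <- r.1.1] ++ build (t + r.1.2) rs'
  else [::].

Definition sumL (rs : seq round) : R := \sum_(r <- rs) r.1.2.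

Definition goodround (r : round) : Prop :=
  [/\ uniq r.1.1, 0 <= r.1.2,
     (forall g, g \in r.1.1 -> [/\ 0 < E g, 0 <= r.2 g & r.2 g + E g <= r.1.2]) &
     (forall g h, g \in r.1.1 -> h \in r.1.1 -> g != h ->
        r.2 g + E g <= r.2 h \/ r.2 h + E h <= r.2 g)].

Definition cross (r r' : round) : Prop :=
  forall g, g \in r.1.1 -> g \in r'.1.1 -> r.2 g = r'.2 g /\ E g + tau g <= r.1.2.

Fixpoint goodrs (rs : seq round) : Prop :=
  if rs is r :: rs' then [/\ goodround r, List.Forall (cross r) rs' & goodrs rs']
  else True.

Lemma goodrs_in {rs r} : goodrs rs -> List.In r rs -> goodround r.
Proof.
elim: rs => [|r' rs IH] //= [H1 _ H3] [<-|Hin] //; exact: IH.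
Qed.

Lemma sumL_ge0 {rs} : goodrs rs -> 0 <= sumL rs.
Proof.
elim: rs => [|r rs IH] /=; first by rewrite /sumL big_nil.
case=> [[_ HL _ _] _ /IH H]; rewrite /sumL big_cons; rewrite /sumL in H; lra.
Qed.

Lemma build_mem {rs t a} : goodrs rs -> a \in build t rs ->
  exists r, [/\ List.In r rs, a.1 \in r.1.1, t + r.2 a.1 <= a.2 &
                a.2 + E a.1 <= t + sumL rs].
Proof.
elim: rs t => [|r rs IH] t //=.
case=> [[Hu HL Hg Hd] Hc Hrs]; rewrite mem_cat => /orP [/mapP [g Hg' ->] | Hb].
- exists r; split => //=; first by left.
  have [_ _ H] := Hg g Hg'. have H2 := sumL_ge0 Hrs.
  rewrite /sumL big_cons; rewrite /sumL in H2; lra.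
- have [r' [Hin Ha Ht Hb2]] := IH (t + r.1.2) Hrs Hb.
  exists r'; split => //; first by right.
  + lra.
  + rewrite /sumL big_cons; rewrite /sumL in Hb2; lra.
Qed.

Lemma build_lo {rs t a} : goodrs rs -> a \in build t rs -> t <= a.2.
Proof.
move=> Hg Ha; have [r [Hin Ha1 Ht _]] := build_mem Hg Ha.
have [_ _ H _] := goodrs_in Hg Hin; have [_ H0 _] := H _ Ha1; lra.
Qed.

Lemma build_disj {rs t a b} : goodrs rs -> a \in build t rs -> b \in build t rs -> a != b ->
  a.2 + E a.1 <= b.2 \/ b.2 + E b.1 <= a.2.
Proof.
elim: rs t a b => [|r rs IH] t a b //=.
case=> [[Hu HL Hg Hd] Hc Hrs]; rewrite !mem_cat.
move=> /orP [/mapP [g Hg' ->] | Ha] /orP [/mapP [h Hh' ->] | Hb] Hab.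
- have Hgh : g != h by apply: contra Hab => /eqP ->.
  have := Hd g h Hg' Hh' Hgh => /=; lra.
- have := build_lo Hrs Hb; have [_ _ H] := Hg g Hg'; rewrite /=; lra.
- have := build_lo Hrs Ha; have [_ _ H] := Hg h Hh'; rewrite /=; lra.
- exact: IH Hrs Ha Hb Hab.
Qed.

Lemma build_sep {rs t a b} : goodrs rs -> a \in build t rs -> b \in build t rs ->
  a.1 = b.1 -> a.2 < b.2 -> a.2 + E a.1 + tau a.1 <= b.2.
Proof.
elim: rs t a b => [|r rs IH] t a b //=.
case=> [[Hu HL Hg Hd] Hc Hrs]; rewrite !mem_cat.
move=> /orP [/mapP [g Hg' ->] | Ha] /orP [/mapP [h Hh' ->] | Hb] /= Hab Hlt.
- by move: Hlt; rewrite Hab ltxx.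
- have [r' [Hin Hb1 Ht _]] := build_mem Hrs Hb.
  have Hcr : cross r r' by move: Hc => /List.Forall_forall; apply.
  rewrite -Hab in Hb1 Ht; have [Ho HEt] := Hcr g Hg' Hb1.
  rewrite Ho; lra.
- have := build_lo Hrs Ha; have [H0 _ H] := Hg h Hh'; lra.
- exact: IH Hrs Ha Hb Hab Hlt.
Qed.

Lemma build_uniq rs t : goodrs rs -> uniq (build t rs).
Proof.
elim: rs t => [|r rs IH] t //=.
case=> [[Hu HL Hg Hd] Hc Hrs]; rewrite cat_uniq IH // andbT.
rewrite map_inj_uniq //; last by move=> x y [].
rewrite Hu /=.
apply/hasPn => b Hb; apply/negP => /mapP [g Hg' Hbe].
have := build_lo Hrs Hb; rewrite Hbe /=; have [H0 _ H] := Hg g Hg'; lra.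
Qed.

Lemma build_count rs t g : goodrs rs ->
  count (fun a => a.1 == g) (build t rs) = (\sum_(r <- rs) (g \in r.1.1))%N.
Proof.
elim: rs t => [|r rs IH] t /=; first by rewrite big_nil.
case=> [[Hu _ _ _] _ Hrs]; rewrite count_cat IH // big_cons count_map.
congr (_ + _)%N; rewrite -(count_uniq_mem g Hu); apply: eq_count => x //.
Qed.

End Build.
Arguments build {R G}.
Arguments sumL {R G}.
Arguments goodround {R G}.
Arguments cross {R G}.
Arguments goodrs {R G}.
Arguments build_mem {R G E tau rs t a}.
Arguments build_lo {R G E tau rs t a}.
Arguments build_disj {R G E tau rs t a b}.
Arguments build_sep {R G E tau rs t a b}.
Arguments build_uniq {R G E tau} rs t.
Arguments build_count {R G E tau} rs t g.
Section Conc.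
Variables (R : realType) (G : choiceType) (E tau : G -> R) (Mall : G -> nat).

Definition sumE (s : seq G) : R := \sum_(g <- s) E g.
Definition off (s : seq G) (g : G) : R := sumE (drop (index g s).+1 s).
Definition posE (s : seq G) := forall x, x \in s -> 0 < E x.

Fixpoint stages (o : G -> R) (prev : nat) (s : seq G) : seq (round R G) :=
  if s is g :: s' then
    nseq (Mall g - prev) (g :: s', cval E tau (g :: s'), o) ++ stages o (Mall g) s'
  else [::].

Definition classr (s : seq G) : seq (round R G) :=
  stages (off s) 1 s ++ [:: (s, sumE s, off s)].

Lemma posE_drop {s} k : posE s -> posE (drop k s).
Proof. by move=> H x /mem_drop /H. Qed.

Lemma sumE_ge0 {s} : posE s -> 0 <= sumE s.
Proof.
elim: s => [|x s IH] H; rewrite /sumE ?big_nil ?big_cons //.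
have Hx := H x (mem_head _ _).
have := IH (fun y Hy => H y (mem_behead (s := x :: s) Hy)); rewrite /sumE; lra.
Qed.

Lemma sumE_drop {s} i : posE s -> sumE (drop i s) <= sumE s.
Proof.
move=> H.
have Hs : sumE s = sumE (take i s) + sumE (drop i s) by rewrite /sumE -big_cat cat_take_drop.
have : 0 <= sumE (take i s) by apply: sumE_ge0 => x /mem_take /H.
lra.
Qed.

Lemma sumE_drop_mono {s i j} : posE s -> (i <= j)%N -> sumE (drop j s) <= sumE (drop i s).
Proof.
move=> H Hij; rewrite -(subnK Hij) -drop_drop; apply: sumE_drop; exact: posE_drop.
Qed.

Lemma off_drop s k g : uniq s -> g \in drop k s -> off s g = off (drop k s) g.
Proof.
elim: s k => [|x s IH] [|k] //= /andP [Hx Hu] Hg.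
have Hgs : g \in s := mem_drop Hg.
have Hxg : (x == g) = false by apply/negP => /eqP Hxg; rewrite Hxg Hgs in Hx.
by rewrite -IH // /off /= Hxg.
Qed.

Lemma off_E {T g} : g \in T -> off T g + E g = sumE (drop (index g T) T).
Proof.
move=> Hg; rewrite (drop_nth g); last by rewrite index_mem.
by rewrite nth_index // /sumE big_cons /off /sumE addrC.
Qed.

Lemma goodround_drop s k L : uniq s -> posE s -> sumE (drop k s) <= L ->
  goodround E (drop k s, L, off s).
Proof.
move=> Hu Hp HL; set T := drop k s.
have HpT : posE T by apply: posE_drop.
have HuT : uniq T by apply: drop_uniq.
have Ho : forall g, g \in T -> off s g = off T g by move=> g; apply: off_drop.
split => //=.
- have := sumE_ge0 HpT; lra.
- move=> g Hg; rewrite Ho //; split; first exact: HpT.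
  + rewrite /off; exact: sumE_ge0 (posE_drop _ HpT).
  + rewrite off_E //; have := sumE_drop (index g T) HpT; lra.
- move=> g h Hg Hh Hgh; rewrite !Ho //.
  have Hi : index g T != index h T.
    apply: contra Hgh => /eqP Hi; apply/eqP.
    by rewrite -(nth_index g Hg) Hi nth_index.
  case: (ltngtP (index g T) (index h T)) Hi => // Hlt _.
  + right; rewrite off_E //; rewrite /off; exact: sumE_drop_mono.
  + left; rewrite off_E //; rewrite /off; exact: sumE_drop_mono.
Qed.

Lemma cval_sum s : sumE s <= cval E tau s.
Proof. by rewrite /cval le_max lexx orbT. Qed.

Lemma cval_Et s g : g \in s -> E g + tau g <= cval E tau s.
Proof.
move=> Hg; rewrite /cval le_max; apply/orP; left.
elim: s Hg => [|x s IH] //; rewrite inE big_cons le_max => /orP [/eqP ->|Hg].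
  by rewrite lexx.
by rewrite IH ?orbT.
Qed.

Lemma In_nseq {T : Type} {n} {x y : T} : List.In y (nseq n x) -> y = x.
Proof. by elim: n => [|n IH] //= [->|/IH]. Qed.

Lemma stages_in o prev s r : List.In r (stages o prev s) ->
  exists k, r = (drop k s, cval E tau (drop k s), o).
Proof.
elim: s prev => [|g s IH] prev //= H0; case: (List.in_app_or _ _ _ H0) => H.
  by rewrite (In_nseq H); exists 0%N; rewrite drop0.
by have [k ->] := IH _ H; exists k.+1.
Qed.

Lemma goodrs_last (A : seq (round R G)) (z : round R G) (o : G -> R) :
  (forall r, List.In r (A ++ [:: z]) -> goodround E r /\ r.2 = o) ->
  (forall r, List.In r A -> forall g, g \in r.1.1 -> E g + tau g <= r.1.2) ->
  goodrs E tau (A ++ [:: z]).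
Proof.
elim: A => [|a A IH] H1 H2 /=.
  split; [by have [] := H1 z (or_introl erefl) | constructor | done].
split.
- by have [] := H1 a (or_introl erefl).
- apply/List.Forall_forall => r Hr g Hga Hgr; split.
  + have [_ ->] := H1 a (or_introl erefl).
    by have [_ ->] := H1 r (or_intror Hr).
  + by apply: H2 => //; left.
- apply: IH => r Hr; [apply: H1 | apply: H2]; by right.
Qed.

Lemma goodrs_class s : uniq s -> posE s -> goodrs E tau (classr s).
Proof.
move=> Hu Hp; apply: (@goodrs_last _ _ (off s)).
- move=> r H0; case: (List.in_app_or _ _ _ H0) => [/stages_in [k ->]|[<-|//]].
    by split => //; apply: goodround_drop => //; apply: cval_sum.
  by split => //; rewrite -{1 2}(drop0 s); apply: goodround_drop; rewrite ?drop0.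
- by move=> r /stages_in [k ->] g /= Hg; apply: cval_Et.
Qed.

Lemma sumL_stages o prev s :
  sumL (stages o prev s) + sumE s = Raux E tau Mall prev s.
Proof.
elim: s prev => [|g s IH] prev /=; first by rewrite /sumL /sumE !big_nil addr0.
rewrite -IH /sumL big_cat /= /sumE big_cons.
have -> : forall n (x : round R G), \sum_(r <- nseq n x) r.1.2 = x.1.2 *+ n.
  by move=> n x; elim: n => [|n IHn]; rewrite ?big_nil // big_cons IHn mulrS.
rewrite -mulr_natl /=; lra.
Qed.

Lemma stages_count0 o prev s g : g \notin s ->
  (\sum_(r <- stages o prev s) (g \in r.1.1) = 0)%N.
Proof.
elim: s prev => [|h s IH] prev; first by rewrite big_nil.
rewrite inE negb_or => /andP [Hgh Hg] /=.
rewrite big_cat IH //= addn0.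

elim: (Mall h - prev)%N => [|n IHn]; rewrite ?big_nil //= big_cons IHn.
by rewrite /= inE (negbTE Hgh) (negbTE Hg).
Qed.

Lemma stages_count o prev s g : uniq s ->
  sorted (fun a b => (Mall a <= Mall b)%N) s ->
  (forall x, x \in s -> prev <= Mall x)%N -> g \in s ->
  (\sum_(r <- stages o prev s) (g \in r.1.1) = Mall g - prev)%N.
Proof.
elim: s prev => [|h s IH] prev //= /andP [Hh Hu] Hs Hpr Hg.
rewrite big_cat.
have -> : forall n (x : round R G), (\sum_(r <- nseq n x) (g \in r.1.1) = n * (g \in x.1.1))%N.
  by move=> n x; elim: n => [|n IHn]; rewrite ?big_nil // big_cons IHn mulSn.
rewrite /= Hg muln1.
have Hall : all (fun x => Mall h <= Mall x)%N s.
  apply: (order_path_min (leT := fun a b => (Mall a <= Mall b)%N)) => //.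
  by move=> a b c; apply: leq_trans.
have Hph := Hpr h (mem_head _ _).
move: Hg; rewrite inE => /orP [/eqP Hgh|Hgs].
  by rewrite stages_count0 ?addn0 ?Hgh //; rewrite -Hgh in Hh.
rewrite IH //; last first.
- by move=> x Hx; move/allP: Hall; apply.
- exact: path_sorted Hs.
have := allP Hall g Hgs; lia.
Qed.

End Conc.
Arguments sumE {R G}.
Arguments off {R G}.
Arguments posE {R G}.
Arguments stages {R G}.
Arguments classr {R G}.

Lemma In_mem {T : eqType} {x : T} {s} : List.In x s -> x \in s.
Proof. elim: s => [|y s IH] //= [->|/IH H]; rewrite inE ?eqxx // H orbT //. Qed.

Lemma In_flatten {T : Type} {x : T} {ss} : List.In x (flatten ss) ->
  exists s, List.In s ss /\ List.In x s.
Proof.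
elim: ss => [|s ss IH] //= H; case: (List.in_app_or _ _ _ H) => H'.
  by exists s; split => //; left.
by have [s' [H1 H2]] := IH H'; exists s'; split => //; right.
Qed.

Lemma goodrs_cat (R : realType) (G : choiceType) (E tau : G -> R) (A B : seq (round R G)) :
  goodrs E tau A -> goodrs E tau B ->
  (forall r r', List.In r A -> List.In r' B -> cross E tau r r') ->
  goodrs E tau (A ++ B).
Proof.
elim: A => [|a A IH] //= [Ha Hc HA] HB Hx; split => //.
- apply/List.Forall_app; split => //; apply/List.Forall_forall => r' Hr'.
  by apply: Hx => //; left.
- by apply: IH => // r r' Hr Hr'; apply: Hx => //; right.
Qed.
Theorem mainTheorem5
  (R : realType) (G : choiceType) (P V : Type)
  (path : G -> P) (xi : P -> V -> Prop)
  (E tau : G -> R) (Mall : G -> nat)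
  (* partition of paths into pairwise disjoint cells, indexed by I *)
  (I : Type) (cell : I -> P -> Prop)
  (Hdisj : forall i j, i <> j -> forall p, cell i p -> cell j p -> False)
  (* filling classes theta_0, ..., theta_{M-1} (ordered by their index) *)
  (M : nat) (Zth : 'I_M -> {fset G}) (cth : 'I_M -> I)
  (Hcth : injective cth)
  (Hfill : forall l g, g \in Zth l -> cell (cth l) (path g))
  (HE : forall l g, g \in Zth l -> 0 < E g)
  (Htau : forall l g, g \in Zth l -> 0 <= tau g)
  (HM : forall l g, g \in Zth l -> (0 < Mall g)%N)
  (t0 : R) :
  exists S : seq (G * R),
    [/\ valid_schedule E tau path xi S,
        (forall a, a \in S -> exists l, a.1 \in Zth l),
        (forall g, (exists l, g \in Zth l) ->
            count (fun a => a.1 == g) S = Mall g) &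
        (forall a, a \in S ->
            t0 <= a.2 /\ a.2 + E a.1 <= t0 + \sum_(l < M) Rfun E tau Mall (Zth l))].
Proof.
pose leM := fun a b : G => (Mall a <= Mall b)%N.
pose sl l := sort leM (enum_fset (Zth l)).
pose cl l := classr E tau Mall (sl l).
pose rs := flatten [seq cl l | l <- index_enum 'I_M].
have Hsl : forall l x, (x \in sl l) = (x \in Zth l) by move=> l x; rewrite mem_sort.
have Hu : forall l, uniq (sl l) by move=> l; rewrite sort_uniq fset_uniq.
have Hp : forall l, posE E (sl l) by move=> l x; rewrite Hsl; apply: HE.
have Hsort : forall l, sorted leM (sl l).
  by move=> l; apply: sort_sorted => a b; apply: leq_total.
have Hdj : forall l l' g, g \in Zth l -> g \in Zth l' -> l = l'.
  move=> l l' g H1 H2; case: (eqVneq l l') => // Hne; exfalso.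
  apply: (Hdisj (cth l) (cth l')) (Hfill _ _ H1) (Hfill _ _ H2).
  by move=> /Hcth Heq; rewrite Heq eqxx in Hne.
have Hcl : forall l r, List.In r (cl l) -> forall g, g \in r.1.1 -> g \in Zth l.
  move=> l r H0; case: (List.in_app_or _ _ _ H0) => [/stages_in [k ->]|[<-|//]] g /=.
    by move/mem_drop; rewrite Hsl.
  by rewrite Hsl.
have Hrs : forall r, List.In r rs -> exists l, List.In r (cl l).
  move=> r Hr0; have [s [Hs Hr]] := In_flatten Hr0; have [l [Hl _]] := (proj1 (List.in_map_iff _ _ _) Hs).
  by exists l; rewrite Hl.
have Hgood : goodrs E tau rs.
  rewrite /rs; have : uniq (index_enum 'I_M) by apply: index_enum_uniq.
  elim: (index_enum 'I_M) => [|l ls IH] //= /andP [Hl Hls].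
  apply: goodrs_cat; first exact: goodrs_class.
    exact: IH.
  move=> r r' Hr Hr'; have [s [Hs Hr2]] := In_flatten Hr'.
  have [l' [Hl' Hl'in]] := (proj1 (List.in_map_iff _ _ _) Hs); rewrite -Hl' in Hr2.
  move=> g Hg Hg'; exfalso.
  have Heq := Hdj _ _ _ (Hcl _ _ Hr _ Hg) (Hcl _ _ Hr2 _ Hg').
  by move: Hl; rewrite Heq (In_mem Hl'in).
have Hmem : forall a, a \in build t0 rs -> exists l, a.1 \in Zth l.
  move=> a Ha; have [r [Hin Ha1 _ _]] := build_mem Hgood Ha.
  have [l Hl] := Hrs r Hin; exists l; exact: Hcl Hl _ Ha1.
have HsumL : sumL rs = \sum_(l < M) Rfun E tau Mall (Zth l).
  rewrite /sumL /rs big_flatten big_map; apply: eq_bigr => l _.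
  rewrite /cl /classr big_cat big_cons big_nil /= addr0.
  exact: sumL_stages.
exists (build t0 rs); split => //.
- split; first exact: (build_uniq _ _ Hgood).
  split.
  + move=> [a [b [Ha Hb Hab _ /andP [Hlo Hhi]]]].
    have [la Hla] := Hmem _ Ha; have [lb Hlb] := Hmem _ Hb.
    have := HE _ _ Hla; have := HE _ _ Hlb.
    have : a != b by apply/eqP.
    move=> /(build_disj Hgood Ha Hb); lra.
  + move=> [a [b [[Ha Hb Hab Hlt _] Hv]]].
    have := build_sep Hgood Ha Hb Hab Hlt; lra.
- move=> g [l0 Hg].
  rewrite (build_count _ _ _ Hgood) /rs big_flatten big_map.
  rewrite (bigD1 l0) //= [X in (_ + X)%N]big1 ?addn0; last first.
    move=> l Hl; rewrite /cl /classr big_cat big_cons big_nil /=.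
    have Hgn : g \notin sl l.
      by rewrite Hsl; apply/negP => Hg'; rewrite (Hdj _ _ _ Hg Hg') eqxx in Hl.
    by rewrite stages_count0 // (negbTE Hgn).
  rewrite /cl /classr big_cat big_cons big_nil /=.
  rewrite (stages_count _ _ _ _ _ _ _ _ _ (Hu l0) (Hsort l0)) ?Hsl ?Hg //.
    by have := HM _ _ Hg; lia.
  by move=> x; rewrite Hsl => /HM.
- move=> a Ha; split; first exact: build_lo Hgood Ha.
  have [r [_ _ _ H]] := build_mem Hgood Ha; by rewrite -HsumL.
Qed.
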